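(* Suppose $(\eta,\omega_G)$, with $\eta(0)\in\operatorname{im}B^T$, is a solution of \[ \dot\eta=B_S^T\omega_G,\qquad M\dot\omega_G=-A\omega_G-B_G\Gamma\eta+u . \] Define $\eta_S=\Pi^T\eta$ with $\Pi=I-\Gamma B_L^T(B_L\Gamma B_L^T)^{-1}B_L$. Then $(\eta_S,\omega_G)$ is a solution of \[ \dot\eta_S=B_S^T\omega_G,\qquad M\dot\omega_G=-A\omega_G-B_S\Gamma\eta_S+u-\hat p, \] where $\hat p=B_G\Gamma B_L^T(B_L\Gamma B_L^T)^{-1}p^\ast$ and $p^\ast=B_L\Gamma\eta(t)$ (a constant vector, conserved along the solution).
   Context: A connected undirected graph with $n$ nodes and $m$ edges, nodes partitioned into $n_g$ generator and $n_\ell$ load nodes; $B$ is an incidence matrix partitioned row-wise as $B=\begin{bmatrix}B_G^T & B_L^T\end{bmatrix}^T$. $\Gamma=\mathrm{diag}(\gamma_k)$ is positive definite (constant), $M,A$ positive definite diagonal, $u\in\mathbb{R}^{n_g}$. Here $B_S$ is the constant projected incidence matrix $B_S=B_G\big(I-\Gamma B_L^T(B_L\Gamma B_L^T)^{-1}B_L\big)$. The first system is obtained from the nonlinear reduced model by neglecting the state dependence of $B_S$ and replacing $\sin(\eta)$ by $\eta$. *)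

(* Defs.v *)
From mathcomp Require Import all_boot all_order all_algebra.
From mathcomp Require Import reals topology normedtype derive.
Import GRing.Theory Num.Theory.
Set Implicit Arguments. Unset Strict Implicit. Unset Printing Implicit Defensive.
Local Open Scope ring_scope.

Section PowerGrid.
Variable R : realType.

Definition is_incidence (n m : nat) (B : 'M[R]_(n, m)) : Prop :=
  forall k : 'I_m, exists i j : 'I_n,
    [/\ i != j, B i k = 1, B j k = -1 &
        forall l : 'I_n, l != i -> l != j -> B l k = 0].

Definition inc_adj (n m : nat) (B : 'M[R]_(n, m)) : rel 'I_n :=
  fun i j => (i != j) && [exists k : 'I_m, (B i k != 0) && (B j k != 0)].

Definition graph_connected (n m : nat) (B : 'M[R]_(n, m)) : Prop :=
  forall i j : 'I_n, connect (inc_adj B) i j.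

Definition projPi (nl m : nat) (Gam : 'M[R]_m) (BL : 'M[R]_(nl, m)) : 'M[R]_m :=
  1%:M - Gam *m BL^T *m invmx (BL *m Gam *m BL^T) *m BL.

Definition projBS (ng nl m : nat) (Gam : 'M[R]_m) (BG : 'M[R]_(ng, m))
  (BL : 'M[R]_(nl, m)) : 'M[R]_(ng, m) := BG *m projPi Gam BL.

End PowerGrid.

(* Main.v *)
From HB Require Import structures.
Require Import Defs.
From mathcomp Require Import all_boot all_order all_algebra.
From mathcomp Require Import boolp functions reals topology normedtype derive realfun.
Import Order.TTheory GRing.Theory Num.Theory.
Local Open Scope ring_scope.

Lemma is_derive_lin (R : realType) (W W' : normedModType R) (L : {linear W -> W'}) (f : R^o -> W) (x : R^o) df :
  continuous L -> is_derive x (1:R^o) f df -> is_derive x (1:R^o) (L \o f) (L df).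
Proof.
move=> Lc [fd fv].
have df' : differentiable f x by apply/derivable1_diffP.
have dL : differentiable L (f x) := linear_differentiable _ Lc.
have dc : differentiable (L \o f) x by apply: differentiable_comp.
apply: DeriveDef; first by apply/derivable1_diffP.
by rewrite deriveE // diff_comp // diff_lin //= -deriveE // fv.
Qed.

Lemma is_derive_coord (R : realType) p q (f : R^o -> 'M[R]_(p,q)) (x : R^o) df i j :
  is_derive x (1:R^o) f df -> is_derive x (1:R^o) (fun t => f t i j : R^o) (df i j).
Proof.
move=> H.
have @L : {linear 'M[R]_(p, q) -> R^o}.
  by exists (fun N : 'M[R]_(_, _) => N i j); do 2![eexists]; do ?[constructor];
     rewrite ?mxE// => ? *; rewrite ?mxE//; move=> ?; rewrite !mxE.
have := @is_derive_lin _ _ _ L f x df (@coord_continuous R p q i j) H.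
by [].
Qed.

Lemma is_derive_scal (R : realType) (W : normedModType R) (k : R^o -> R^o) (c : W) (x : R^o) dk :
  is_derive x (1:R^o) k dk -> is_derive x (1:R^o) (fun t => k t *: c) (dk *: c).
Proof.
move=> H.
move: H => [kd kv].
have dk' : differentiable k x by apply/derivable1_diffP.
have dg : differentiable (fun t => k t *: c) x by apply: differentiableZl.
apply: DeriveDef; first by apply/derivable1_diffP.
by rewrite deriveE // diffZl // -deriveE // kv.
Qed.

Lemma is_derive_mulmx (R : realType) n m (A : 'M[R]_(n,m)) (f : R^o -> 'cV[R]_m) (x : R^o) df :
  is_derive x (1:R^o) f df -> is_derive x (1:R^o) (fun t => A *m f t) (A *m df).
Proof.
move=> H.
have E : forall g : 'cV[R]_m, A *m g = \sum_(k < m) g k 0 *: col k A.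
  move=> g; apply/matrixP => i j; rewrite !mxE summxE.
  by apply: eq_bigr => k _; rewrite !mxE (ord1 j) mulrC.
pose h := fun (k : 'I_m) (t : R^o) => f t k 0 *: col k A.
have Hh : is_derive x (1:R^o) (\sum_(k < m) h k) (\sum_(k < m) df k 0 *: col k A).
  apply: is_derive_sum => k; apply: is_derive_scal; exact: is_derive_coord.
idtac.
have -> : (fun t => A *m f t) = \sum_(k < m) h k by apply/funext => t; rewrite E fct_sumE.
by rewrite E.
Qed.


Lemma edge_diff (R : realType) n m (B : 'M[R]_(n, m)) (z : 'rV[R]_n) k i j :
  i != j -> B i k = 1 -> B j k = -1 ->
  (forall l : 'I_n, l != i -> l != j -> B l k = 0) ->
  (z *m B) 0 k = z 0 i - z 0 j.
Proof.
move=> ij Bi Bj Bo; rewrite mxE (bigD1 i) //= (bigD1 j) /=; last by rewrite eq_sym.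
rewrite big1 ?addr0; last by move=> l /andP [li lj]; rewrite Bo ?mulr0.
by rewrite Bi Bj mulr1 mulrN1.
Qed.

Lemma unit_X (R : realType) ng nl m (B : 'M[R]_(ng + nl, m)) (gam : 'rV[R]_m) :
  (0 < ng)%N -> is_incidence B -> graph_connected B -> (forall k, 0 < gam 0 k) ->
  dsubmx B *m diag_mx gam *m (dsubmx B)^T \in unitmx.
Proof.
move=> ng0 inc conn gpos.
rewrite -row_free_unit; apply/inj_row_free => v Hv.
set w := v *m dsubmx B.
have Hw : w = 0.
  have H0 : (w *m diag_mx gam *m w^T) 0 0 = 0.
    have E : w *m diag_mx gam *m w^T = v *m (dsubmx B *m diag_mx gam *m (dsubmx B)^T) *m v^T.
      by rewrite /w trmx_mul !mulmxA.
    by rewrite E Hv mul0mx mxE.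
  move: H0; rewrite mxE => H0.
  have nn : forall k : 'I_m, true -> 0 <= (w *m diag_mx gam) 0 k * w^T k 0.
    move=> k _; rewrite mul_mx_diag !mxE mulrAC; apply: mulr_ge0; last exact: ltW.
    by rewrite -expr2 sqr_ge0.
  have H1 := psumr_eq0P nn H0.
  apply/matrixP => i k; rewrite (ord1 i) mxE.
  have := H1 k isT.
  rewrite mul_mx_diag !mxE mulrAC -expr2 => /eqP; rewrite mulf_eq0 sqrf_eq0 (gt_eqF (gpos k)) orbF.
  by move/eqP.
pose z : 'rV[R]_(ng + nl) := row_mx 0 v.
have zB : z *m B = 0 by rewrite -(vsubmxK B) mul_row_col mul0mx add0r -/w Hw.
have adj : forall a b, inc_adj B a b -> z 0 a = z 0 b.
  move=> a b /andP [ab /existsP [k /andP [Ba Bb]]].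
  have [i [j [ij Bi Bj Bo]]] := inc k.
  have zij : z 0 i = z 0 j.
    by apply/eqP; rewrite -subr_eq0 -(@edge_diff _ _ _ B z k i j ij Bi Bj Bo) zB mxE.
  have ai : (a == i) || (a == j).
    by apply/negPn/negP; rewrite negb_or => /andP [a1 a2]; move: Ba; rewrite Bo ?eqxx.
  have bi : (b == i) || (b == j).
    by apply/negPn/negP; rewrite negb_or => /andP [a1 a2]; move: Bb; rewrite Bo ?eqxx.
  by case/orP: ai => /eqP ->; case/orP: bi => /eqP ->.
have cz : forall a b, connect (inc_adj B) a b -> z 0 a = z 0 b.
  move=> a b /connectP [p]; elim: p a => [|c p IH] a /=; first by move=> _ ->.
  by move=> /andP [ac pth] bl; rewrite (adj _ _ ac) (IH _ pth bl).
apply/matrixP => i l; rewrite (ord1 i) mxE.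
have := cz (lshift nl (Ordinal ng0)) (rshift ng l) (conn _ _).
by rewrite /z row_mxEl row_mxEr mxE.
Qed.

Lemma acz (V : zmodType) (a x p u : V) : a - (x + p) + u = a - x + u - p.
Proof. by rewrite opprD !addrA [RHS]addrAC. Qed.

Theorem proposition4 (R : realType) (ng nl m : nat)
  (B : 'M[R]_(ng + nl, m)) (gam : 'rV[R]_m) (mv av : 'rV[R]_ng)
  (u : 'cV[R]_ng) (eta : R -> 'cV[R]_m) (omega domega : R -> 'cV[R]_ng) :
  (0 < ng)%N ->
  is_incidence B -> graph_connected B ->
  (forall k, 0 < gam 0 k) -> (forall i, 0 < mv 0 i) -> (forall i, 0 < av 0 i) ->
  (exists x : 'cV[R]_(ng + nl), eta 0 = B^T *m x) ->
  (forall t : R, is_derive (t : R^o) (1 : R^o) eta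
     ((projBS (diag_mx gam) (usubmx B) (dsubmx B))^T *m omega t)) ->
  (forall t : R, is_derive (t : R^o) (1 : R^o) omega (domega t)) ->
  (forall t : R, diag_mx mv *m domega t =
     - (diag_mx av *m omega t) - usubmx B *m diag_mx gam *m eta t + u) ->
  let Gam := diag_mx gam in
  let BG := usubmx B in
  let BL := dsubmx B in
  let BS := projBS Gam BG BL in
  let etaS := fun t : R => (projPi Gam BL)^T *m eta t in
  exists pstar : 'cV[R]_nl,
    (forall t : R, BL *m Gam *m eta t = pstar) /\
    let phat := BG *m Gam *m BL^T *m invmx (BL *m Gam *m BL^T) *m pstar in
    forall t : R,
      is_derive (t : R^o) (1 : R^o) etaS (BS^T *m omega t) /\
      diag_mx mv *m domega t =
        - (diag_mx av *m omega t) - BS *m Gam *m etaS t + u - phat.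
Proof.
move=> ng0 inc conn gpos mpos apos _ Heta Homega Hdyn Gam BG BL BS etaS.
have XU : BL *m Gam *m BL^T \in unitmx by exact: unit_X.
set Xi := invmx (BL *m Gam *m BL^T).
set P := projPi Gam BL.
have GT : Gam^T = Gam by rewrite tr_diag_mx.
have XiT : Xi^T = Xi by rewrite /Xi trmx_inv !trmx_mul trmxK GT mulmxA.
have PGBLT : P *m Gam *m BL^T = 0.
  rewrite /P /projPi mulmxBl mul1mx mulmxBl -/Xi.
  have E : Gam *m BL^T *m Xi *m BL *m Gam *m BL^T = Gam *m BL^T *m (Xi *m (BL *m Gam *m BL^T)).
    by rewrite !mulmxA.
  by rewrite E mulVmx // mulmx1 subrr.
have PT : P^T = 1%:M - BL^T *m Xi *m BL *m Gam.
  by rewrite /P /projPi linearB /= trmx1 !trmx_mul trmxK GT XiT !mulmxA.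
have BLGPT : BL *m Gam *m P^T = 0.
  by rewrite -[BL]trmxK -GT -!trmx_mul mulmxA PGBLT trmx0.
have PP : P *m P = P.
  rewrite {2}/P /projPi mulmxBr mulmx1 !mulmxA PGBLT !mul0mx subr0 //.
have PTPT : P^T *m P^T = P^T by rewrite -trmx_mul PP.
have PG : P *m Gam = Gam - Gam *m BL^T *m Xi *m BL *m Gam.
  by rewrite /P /projPi mulmxBl mul1mx.
have PGPT : P *m Gam *m P^T = P *m Gam.
  by rewrite PT mulmxBr mulmx1 !mulmxA PGBLT !mul0mx subr0.
have BST : BS^T = P^T *m BG^T by rewrite /BS /projBS trmx_mul.
have cst : forall t, BL *m Gam *m eta t = BL *m Gam *m eta 0.
  move=> t; apply/matrixP => i j.
  apply: (@is_derive_0_is_cst R (fun s : R => (BL *m Gam *m eta s) i j)) => s.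
  have H := @is_derive_coord R _ _ _ _ _ i j (@is_derive_mulmx R _ _ (BL *m Gam) _ _ _ (Heta s)).
  apply: is_derive_eq H _.
  by rewrite -/BS BST mulmxA mulmxA BLGPT !mul0mx mxE.
exists (BL *m Gam *m eta 0); split; first exact: cst.
move=> phat t; split.
  apply: is_derive_eq (@is_derive_mulmx R _ _ P^T _ _ _ (Heta t)) _.
  by rewrite -/BS BST mulmxA mulmxA PTPT.
have key : BG *m Gam *m eta t = BS *m Gam *m etaS t + phat.
  rewrite /phat -(cst t) /etaS /BS /projBS -/P.
  have E1 : BG *m P *m Gam *m (P^T *m eta t) = BG *m (P *m Gam *m P^T) *m eta t.
    by rewrite !mulmxA.
  have E2 : BG *m Gam *m BL^T *m Xi *m (BL *m Gam *m eta t)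
     = BG *m (Gam *m BL^T *m Xi *m BL *m Gam) *m eta t by rewrite !mulmxA.
  by rewrite E1 E2 PGPT PG -mulmxDl -mulmxDr subrK.
rewrite Hdyn key; exact: acz.
Qed.
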